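(* Let $\mathsf{SUPERINV}$ be the verification condition provider given by $\mathsf{SUPERINV}(\mathtt{while}(\varphi)\{C_{\mathrm{body}}\}[I],f)=\mathsf{true}$ iff $[\varphi]\cdot\mathrm{dwp}^*[\![C_{\mathrm{body}}]\!](I)+[\neg\varphi]\cdot f\le I$. Then $\mathsf{SUPERINV}$ yields upper bounds for $\mathrm{dwp}$, and $\mathrm{trans}^{\preceq}_{\mathrm{dwp}}$ preserves $\mathsf{SUPERINV}$.
   Context: States: fix a countably infinite set of program variables with values in $\mathbb{Q}_{\ge 0}$; a state is a map $\sigma$ from variables to $\mathbb{Q}_{\ge0}$ which is $0$ for all but finitely many variables; $\mathsf{States}$ is the set of states. A predicate is a map $\varphi:\mathsf{States}\to\{\mathsf{true},\mathsf{false}\}$; $\varphi\models\psi$ means every state satisfying $\varphi$ satisfies $\psi$; $\models\varphi$ means $\varphi$ holds in every state; $\varphi\Rightarrow\psi$ is the usual implication. Expectations: $\mathbb{E}$ is the set of maps $\mathsf{States}\to[0,\infty]$, ordered pointwise; $+,\cdot$ pointwise with $0\cdot\infty=0$; $\sqcap$ pointwise min; $[\varphi]$ Iverson bracket; $(\varphi\to g)(\sigma)=g(\sigma)$ if $\sigma\models\varphi$, else $\infty$; $f[x/E](\sigma)=f(\sigma[x\mapsto E(\sigma)])$. Programs of $\mathsf{pGCL}$: $C ::= \mathtt{skip} \mid x:=E \mid C;C \mid \mathtt{if}\ \varphi_1\to C\ \square\ \varphi_2\to C \mid \{C\}[p]\{C\} \mid \mathtt{while}(\varphi)\{C\}[I]$,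 where $E:\mathsf{States}\to\mathbb{Q}_{\ge0}$, $p:\mathsf{States}\to[0,1]$, in every guarded choice $\varphi_1\vee\varphi_2$ is valid, and every loop carries an invariant annotation $I\in\mathbb{E}$. Demonic weakest preexpectation: $\mathrm{dwp}[\![\mathtt{skip}]\!](f)=f$; $\mathrm{dwp}[\![x:=E]\!](f)=f[x/E]$; $\mathrm{dwp}[\![C_1;C_2]\!](f)=\mathrm{dwp}[\![C_1]\!](\mathrm{dwp}[\![C_2]\!](f))$; $\mathrm{dwp}[\![\mathtt{if}\ \varphi_1\to C_1\ \square\ \varphi_2\to C_2]\!](f)=(\varphi_1\to\mathrm{dwp}[\![C_1]\!](f))\sqcap(\varphi_2\to\mathrm{dwp}[\![C_2]\!](f))$; $\mathrm{dwp}[\![\{C_1\}[p]\{C_2\}]\!](f)=p\cdot\mathrm{dwp}[\![C_1]\!](f)+(1-p)\cdot\mathrm{dwp}[\![C_2]\!](f)$; loops: least fixpoint of $g\mapsto[\neg\varphi]\cdot f+[\varphi]\cdot\mathrm{dwp}[\![C']\!](g)$. The auxiliary $\mathrm{dwp}^*$ follows the same rules except $\mathrm{dwp}^*[\![\mathtt{while}(\varphi)\{C'\}[I]]\!](f)=I$. Implementation relation $\multimap$: smallest partial order on $\mathsf{pGCL}$ closed under: if $C_1'\multimap C_1$, $C_2'\multimap C_2$ then $C_1';C_2'\multimap C_1;C_2$ and $\{C_1'\}[p]\{C_2'\}\multimap\{C_1\}[p]\{C_2\}$; if moreover $\varphi_1'\models\varphi_1$, $\varphi_2'\models\varphi_2$,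 $\models\varphi_1'\vee\varphi_2'$ then $\mathtt{if}\ \varphi_1'\to C_1'\ \square\ \varphi_2'\to C_2'\multimap\mathtt{if}\ \varphi_1\to C_1\ \square\ \varphi_2\to C_2$; if $C'\multimap C$ then $\mathtt{while}(\varphi)\{C'\}\multimap\mathtt{while}(\varphi)\{C\}$. Verification conditions: a provider $\mathfrak{C}$ maps annotated loops and $f\in\mathbb{E}$ to truth values; $\mathrm{vc}^{\mathfrak{C},\mathrm{dwp}}[\![C]\!](f)$: $\mathsf{true}$ for $\mathtt{skip}$ and assignments; $\mathrm{vc}[\![C_1]\!](\mathrm{dwp}^*[\![C_2]\!](f))\wedge\mathrm{vc}[\![C_2]\!](f)$ for $C_1;C_2$; $\mathrm{vc}[\![C_1]\!](f)\wedge\mathrm{vc}[\![C_2]\!](f)$ for guarded and probabilistic choices; $\mathfrak{C}(\mathtt{while}(\varphi)\{C'\}[I],f)\wedge\mathrm{vc}[\![C']\!](I)$ for loops. $\mathfrak{C}$ yields upper bounds for $\mathrm{dwp}$ if for all $C\in\mathsf{pGCL}$, $f\in\mathbb{E}$, $\mathrm{vc}^{\mathfrak{C},\mathrm{dwp}}[\![C]\!](f)$ implies $\mathrm{dwp}[\![C]\!](f)\le\mathrm{dwp}^*[\![C]\!](f)$. Transformer $\mathrm{trans}^{\preceq}_{\mathrm{dwp}}$ (with $f\preceq g$ the predicate true at $\sigma$ iff $f(\sigma)\le g(\sigma)$): $\mathtt{skip}$, assignments unchanged; $C_1;C_2\mapsto \mathrm{trans}[\![C_1]\!](\mathrm{dwp}^*[\![C_2]\!](f));\mathrm{trans}[\![C_2]\!](f)$;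 $\mathtt{if}\ \varphi_1\to C_1\ \square\ \varphi_2\to C_2\mapsto\mathtt{if}\ \psi_1\to\mathrm{trans}[\![C_1]\!](f)\ \square\ \psi_2\to\mathrm{trans}[\![C_2]\!](f)$ with $\psi_1=\varphi_1\wedge(\varphi_2\Rightarrow\mathrm{dwp}^*[\![C_1]\!](f)\preceq\mathrm{dwp}^*[\![C_2]\!](f))$, $\psi_2=\varphi_2\wedge(\varphi_1\Rightarrow\mathrm{dwp}^*[\![C_2]\!](f)\preceq\mathrm{dwp}^*[\![C_1]\!](f))$; probabilistic choice transformed branchwise; $\mathtt{while}(\varphi)\{C'\}[I]\mapsto\mathtt{while}(\varphi)\{\mathrm{trans}[\![C']\!](I)\}[I]$. $\mathrm{trans}^{\preceq}_{\mathrm{dwp}}$ preserves $\mathfrak{C}$ if for all $C,C'$, $f$: $\mathrm{vc}^{\mathfrak{C},\mathrm{dwp}}[\![C]\!](f)$ and $C'\multimap\mathrm{trans}^{\preceq}_{\mathrm{dwp}}[\![C]\!](f)$ imply $\mathrm{vc}^{\mathfrak{C},\mathrm{dwp}}[\![C']\!](f)$. *)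

(* Defs.v *)
From mathcomp Require Import all_boot all_order all_algebra.
From mathcomp Require Import all_classical all_reals.
From mathcomp Require Import ereal.
Set Implicit Arguments. Unset Strict Implicit. Unset Printing Implicit Defensive.
Import Order.TTheory GRing.Theory Num.Theory.
Local Open Scope ring_scope.

(* Program variables are indexed by nat (a countably infinite set). *)
Definition qnn := {q : rat | 0 <= q}.

Definition fin_supp (s : nat -> qnn) : Prop :=
  exists N : nat, forall x : nat, (N <= x)%N -> val (s x) = 0.

Definition State := {s : nat -> qnn | fin_supp s}.

Definition upd_fun (s : nat -> qnn) (x : nat) (v : qnn) : nat -> qnn :=
  fun y => if y == x then v else s y.

Lemma upd_fin_supp (s : State) (x : nat) (v : qnn) :
  fin_supp (upd_fun (proj1_sig s) x v).
Proof.
case: s => s [N HN] /=; exists (maxn N x.+1) => y Hy.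
rewrite /upd_fun; case: eqP => [Hyx|_].
  by subst y; move: Hy; rewrite geq_max ltnn andbF.
by apply: HN; move: Hy; rewrite geq_max => /andP[].
Qed.

Definition upd (s : State) (x : nat) (v : qnn) : State :=
  exist _ (upd_fun (proj1_sig s) x v) (upd_fin_supp s x v).

Definition pred_st := State -> bool.

Section Expect.
Variable R : realType.
Local Open Scope ereal_scope.

(* Expectations: maps States -> [0, oo]; we use \bar R together with
   the nonnegativity predicate [nonneg]. *)
Definition expect := State -> \bar R.
Definition nonneg (f : expect) : Prop := forall s, 0 <= f s.
Definition leE (f g : expect) : Prop := forall s, f s <= g s.

Definition iverson (b : bool) : \bar R := (if b then 1%R else 0%R)%:E.

Definition guardE (b : bool) (x : \bar R) : \bar R := if b then x else +oo.

(* Least fixpoint (Knaster-Tarski) in the complete lattice of expectations: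
   pointwise infimum of all prefixed points. *)
Definition lfp (Phi : expect -> expect) : expect :=
  fun s => ereal_inf [set g s | g in [set g : expect | nonneg g /\ leE (Phi g) g]].

Inductive pGCL : Type :=
| Skip : pGCL
| Assign : nat -> (State -> qnn) -> pGCL
| Seq : pGCL -> pGCL -> pGCL
| If : pred_st -> pGCL -> pred_st -> pGCL -> pGCL
| Prob : pGCL -> (State -> R) -> pGCL -> pGCL
| While : pred_st -> pGCL -> expect -> pGCL.

Fixpoint wf (C : pGCL) : Prop :=
  match C with
  | Skip => True
  | Assign _ _ => True
  | Seq C1 C2 => wf C1 /\ wf C2
  | If p1 C1 p2 C2 => (forall s, p1 s || p2 s) /\ wf C1 /\ wf C2
  | Prob C1 p C2 => (forall s, (0 <= p s <= 1)%R) /\ wf C1 /\ wf C2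
  | While _ C Inv => nonneg Inv /\ wf C
  end.

Definition prob_comb (p : State -> R) (a b : expect) : expect :=
  fun s => (p s)%:E * a s + (1 - p s)%:E * b s.

Fixpoint dwp (C : pGCL) (f : expect) : expect :=
  match C with
  | Skip => f
  | Assign x E => fun s => f (upd s x (E s))
  | Seq C1 C2 => dwp C1 (dwp C2 f)
  | If p1 C1 p2 C2 => fun s =>
      Order.min (guardE (p1 s) (dwp C1 f s)) (guardE (p2 s) (dwp C2 f s))
  | Prob C1 p C2 => prob_comb p (dwp C1 f) (dwp C2 f)
  | While phi C' _ =>
      lfp (fun g s => iverson (~~ phi s) * f s + iverson (phi s) * dwp C' g s)
  end.

Fixpoint dwpS (C : pGCL) (f : expect) : expect :=
  match C with
  | Skip => f
  | Assign x E => fun s => f (upd s x (E s))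
  | Seq C1 C2 => dwpS C1 (dwpS C2 f)
  | If p1 C1 p2 C2 => fun s =>
      Order.min (guardE (p1 s) (dwpS C1 f s)) (guardE (p2 s) (dwpS C2 f s))
  | Prob C1 p C2 => prob_comb p (dwpS C1 f) (dwpS C2 f)
  | While _ _ Inv => Inv
  end.

Inductive impl : pGCL -> pGCL -> Prop :=
| impl_refl C : impl C C
| impl_trans C1 C2 C3 : impl C1 C2 -> impl C2 C3 -> impl C1 C3
| impl_seq C1' C2' C1 C2 :
    impl C1' C1 -> impl C2' C2 -> impl (Seq C1' C2') (Seq C1 C2)
| impl_prob C1' C2' C1 C2 p :
    impl C1' C1 -> impl C2' C2 -> impl (Prob C1' p C2') (Prob C1 p C2)
| impl_if C1' C2' C1 C2 (p1' p2' p1 p2 : pred_st) :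
    impl C1' C1 -> impl C2' C2 ->
    (forall s, p1' s -> p1 s) -> (forall s, p2' s -> p2 s) ->
    (forall s, p1' s || p2' s) ->
    impl (If p1' C1' p2' C2') (If p1 C1 p2 C2)
| impl_while phi C' C Inv :
    impl C' C -> impl (While phi C' Inv) (While phi C Inv).

(* A provider maps an annotated loop while(phi){C}[Inv] and f to a truth value. *)
Definition provider := pred_st -> pGCL -> expect -> expect -> Prop.

Fixpoint vc (P : provider) (C : pGCL) (f : expect) : Prop :=
  match C with
  | Skip => True
  | Assign _ _ => True
  | Seq C1 C2 => vc P C1 (dwpS C2 f) /\ vc P C2 f
  | If _ C1 _ C2 => vc P C1 f /\ vc P C2 f
  | Prob C1 _ C2 => vc P C1 f /\ vc P C2 f
  | While phi C' Inv => P phi C' Inv f /\ vc P C' Inv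
  end.

Definition yields_upper_bounds (P : provider) : Prop :=
  forall (C : pGCL) (f : expect), wf C -> nonneg f ->
    vc P C f -> leE (dwp C f) (dwpS C f).

Fixpoint trans (C : pGCL) (f : expect) : pGCL :=
  match C with
  | Skip => Skip
  | Assign x E => Assign x E
  | Seq C1 C2 => Seq (trans C1 (dwpS C2 f)) (trans C2 f)
  | If p1 C1 p2 C2 =>
      If (fun s => p1 s && (p2 s ==> (dwpS C1 f s <= dwpS C2 f s)))
         (trans C1 f)
         (fun s => p2 s && (p1 s ==> (dwpS C2 f s <= dwpS C1 f s)))
         (trans C2 f)
  | Prob C1 p C2 => Prob (trans C1 f) p (trans C2 f)
  | While phi C' Inv => While phi (trans C' Inv) Inv
  end.

Definition preserves (P : provider) : Prop :=
  forall (C C' : pGCL) (f : expect), wf C -> wf C' -> nonneg f ->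
    vc P C f -> impl C' (trans C f) -> vc P C' f.

Definition SUPERINV : provider := fun phi Cb Inv f =>
  leE (fun s => iverson (phi s) * dwpS Cb Inv s + iverson (~~ phi s) * f s) Inv.

End Expect.

(* Main.v *)
Require Import Defs.
From mathcomp Require Import all_boot all_order all_algebra.
From mathcomp Require Import all_classical all_reals.
From mathcomp Require Import ereal.
Import Order.TTheory GRing.Theory Num.Theory.

Section Proofs.
Variable R : realType.
Local Open Scope ereal_scope.

Lemma ivE (b : bool) (x : \bar R) : iverson R b * x = if b then x else 0.
Proof. by case: b; rewrite /iverson ?mul1e ?mul0e. Qed.

Lemma iv_mono (b : bool) (x y : \bar R) : x <= y -> iverson R b * x <= iverson R b * y.
Proof. by rewrite !ivE; case: b. Qed.

Lemma prob_mono (p : State -> R) a b a' b' s :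
  (0 <= p s <= 1)%R -> a s <= a' s -> b s <= b' s ->
  prob_comb p a b s <= prob_comb p a' b' s.
Proof.
move=> /andP[p0 p1] ha hb; rewrite /prob_comb; apply: leeD.
  by apply: lee_wpmul2l => //; rewrite lee_fin.
by apply: lee_wpmul2l => //; rewrite lee_fin subr_ge0.
Qed.

Lemma min_mono (x y x' y' : \bar R) : x <= x' -> y <= y' ->
  Order.min x y <= Order.min x' y'.
Proof.
move=> h1 h2; rewrite le_min !ge_min.
by rewrite h1 h2 orbT.
Qed.

Lemma guard_mono b (x y : \bar R) : x <= y -> guardE b x <= guardE b y.
Proof. by case: b. Qed.

Lemma dwpS_mono (C : pGCL R) : wf C -> forall f g, leE f g -> leE (dwpS C f) (dwpS C g).
Proof.
elim: C => [|x E|C1 IH1 C2 IH2|p1 C1 IH1 p2 C2 IH2|C1 IH1 p C2 IH2|phi C IH I] /=.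
- by [].
- by move=> _ f g h s; apply: h.
- by move=> [w1 w2] f g h; apply: IH1 => //; apply: IH2.
- move=> [_ [w1 w2]] f g h s; apply: min_mono; apply: guard_mono.
  + exact: IH1.
  + exact: IH2.
- move=> [wp [w1 w2]] f g h s; apply: prob_mono => //.
  + exact: IH1.
  + exact: IH2.
- by move=> _ f g h s.
Qed.

Lemma dwp_mono (C : pGCL R) : wf C -> forall f g, leE f g -> leE (dwp C f) (dwp C g).
Proof.
elim: C => [|x E|C1 IH1 C2 IH2|p1 C1 IH1 p2 C2 IH2|C1 IH1 p C2 IH2|phi C IH I] /=.
- by [].
- by move=> _ f g h s; apply: h.
- by move=> [w1 w2] f g h; apply: IH1 => //; apply: IH2.
- move=> [_ [w1 w2]] f g h s; apply: min_mono; apply: guard_mono.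
  + exact: IH1.
  + exact: IH2.
- move=> [wp [w1 w2]] f g h s; apply: prob_mono => //.
  + exact: IH1.
  + exact: IH2.
- move=> [_ w] f g h s; rewrite /lfp; apply: le_ereal_inf; apply: image_subset.
  move=> k [k0 hk]; split => // t; apply: le_trans (hk t).
  by apply: leeD => //; apply: iv_mono.
Qed.

Lemma vc_anti (C : pGCL R) : wf C -> forall f g, leE f g ->
  vc (@SUPERINV R) C g -> vc (@SUPERINV R) C f.
Proof.
elim: C => [|x E|C1 IH1 C2 IH2|p1 C1 IH1 p2 C2 IH2|C1 IH1 p C2 IH2|phi C IH I] /=.
- by [].
- by [].
- move=> [w1 w2] f g h [v1 v2]; split; last exact: IH2 v2.
  by apply: IH1 v1 => //; apply: dwpS_mono.
- move=> [_ [w1 w2]] f g h [v1 v2]; split; [exact: IH1 v1|exact: IH2 v2].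
- move=> [_ [w1 w2]] f g h [v1 v2]; split; [exact: IH1 v1|exact: IH2 v2].
- move=> [_ w] f g h [v1 v2]; split => // s; apply: le_trans (v1 s).
  by apply: leeD => //; apply: iv_mono.
Qed.

Lemma part1' (C : pGCL R) : wf C -> forall f,
  vc (@SUPERINV R) C f -> leE (dwp C f) (dwpS C f).
Proof.
elim: C => [|x E|C1 IH1 C2 IH2|p1 C1 IH1 p2 C2 IH2|C1 IH1 p C2 IH2|phi C IH I] /=.
- by move=> _ f _ s.
- by move=> _ f _ s.
- move=> [w1 w2] f [v1 v2] s.
  apply: le_trans (IH1 w1 _ v1 s).
  by apply: dwp_mono => // t; apply: IH2.
- move=> [_ [w1 w2]] f [v1 v2] s; apply: min_mono; apply: guard_mono.
  + exact: IH1.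
  + exact: IH2.
- move=> [wp [w1 w2]] f [v1 v2] s; apply: prob_mono => //.
  + exact: IH1.
  + exact: IH2.
- move=> [I0 w] f [v1 v2] s; rewrite /lfp; apply: ereal_inf_lbound.
  exists I => //; split => // t; apply: le_trans (v1 t).
  rewrite addeC; apply: leeD => //; apply: iv_mono; exact: IH.
Qed.

Lemma part1 : yields_upper_bounds (@SUPERINV R).
Proof. by move=> C f w _ v; apply: part1'. Qed.

Fixpoint Sr (A B : pGCL R) : Prop :=
 match A, B with
 | Skip, Skip => True
 | Assign x E, Assign y F => x = y /\ E = F
 | Seq a1 a2, Seq b1 b2 => Sr a1 b1 /\ Sr a2 b2
 | If q1 a1 q2 a2, If p1 b1 p2 b2 =>
     Sr a1 b1 /\ Sr a2 b2 /\ (forall s, q1 s -> p1 s) /\ (forall s, q2 s -> p2 s)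
 | Prob a1 p a2, Prob b1 p' b2 => p = p' /\ Sr a1 b1 /\ Sr a2 b2
 | While phi a Iv, While phi' b Iv' => phi = phi' /\ Iv = Iv' /\ Sr a b
 | _, _ => False
 end.

Lemma Sr_refl A : Sr A A.
Proof. by elim: A => //= *; repeat split. Qed.

Lemma Sr_trans A B C : Sr A B -> Sr B C -> Sr A C.
Proof.
elim: A B C => [|x E|a1 IH1 a2 IH2|q1 a1 IH1 q2 a2 IH2|a1 IH1 p a2 IH2|phi a IH I]
  [|y F|b1 b2|r1 b1 r2 b2|b1 p' b2|phi' b I'] [|z G|c1 c2|t1 c1 t2 c2|c1 p'' c2|phi'' c I''] //=.
- by move=> [-> ->] [-> ->].
- by move=> [h1 h2] [k1 k2]; split; [exact: IH1 k1|exact: IH2 k2].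
- move=> [h1 [h2 [h3 h4]]] [k1 [k2 [k3 k4]]]; split; first exact: IH1 k1.
  split; first exact: IH2 k2.
  by split=> s hs; [apply: k3; apply: h3|apply: k4; apply: h4].
- by move=> [-> [h1 h2]] [-> [k1 k2]]; split=> //; split; [exact: IH1 k1|exact: IH2 k2].
- by move=> [-> [-> h]] [-> [-> k]]; split=> //; split=> //; exact: IH h k.
Qed.

Lemma impl_Sr A B : impl A B -> Sr A B.
Proof.
elim=> //=.
- by move=> *; apply: Sr_refl.
- by move=> C1 C2 C3 _ h1 _ h2; apply: Sr_trans h1 h2.
Qed.

Lemma main2 (C : pGCL R) : forall f C', wf C' -> Sr C' (trans C f) ->
  leE (dwpS C' f) (dwpS C f) /\ (vc (@SUPERINV R) C f -> vc (@SUPERINV R) C' f).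
Proof.
elim: C => [|x E|C1 IH1 C2 IH2|p1 C1 IH1 p2 C2 IH2|C1 IH1 p C2 IH2|phi C IH I] f
  [|y F|b1 b2|r1 b1 r2 b2|b1 p' b2|phi' b I'] //=.
- move=> *; split=> // s.
- by move=> _ [-> ->]; split=> // s.
- move=> [w1 w2] [h1 h2].
  have [d2 v2] := IH2 f b2 w2 h2.
  have [d1 v1] := IH1 (dwpS C2 f) b1 w1 h1.
  split.
    move=> s; apply: le_trans (d1 s); exact: dwpS_mono.
  move=> [u1 u2]; split; last exact: v2.
  by apply: vc_anti (v1 u1).
- move=> [cov [w1 w2]] [h1 [h2 [g1 g2]]].
  have [d1 v1] := IH1 f b1 w1 h1.
  have [d2 v2] := IH2 f b2 w2 h2.
  split; last by move=> [u1 u2]; split; [exact: v1|exact: v2].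
  move=> s; rewrite ge_min.
  have := cov s; case/orP => hq.
  + move/andP: (g1 s hq) => [-> /implyP hi].
    apply/orP; left; rewrite hq /=.
    apply: le_trans (d1 s) _; rewrite le_min lexx /=.
    by case: (p2 s) hi => /= [->//|_]; rewrite leey.
  + move/andP: (g2 s hq) => [-> /implyP hi].
    apply/orP; right; rewrite hq /=.
    apply: le_trans (d2 s) _; rewrite le_min lexx andbT /=.
    by case: (p1 s) hi => /= [->//|_]; rewrite leey.
- move=> [wp [w1 w2]] [<- [h1 h2]].
  have [d1 v1] := IH1 f b1 w1 h1.
  have [d2 v2] := IH2 f b2 w2 h2.
  split; last by move=> [u1 u2]; split; [exact: v1|exact: v2].
  by move=> s; apply: prob_mono.
- move=> [I0 w] [-> [-> h]].
  have [d v] := IH I b w h.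
  split => // -[u1 u2]; split; last exact: v.
  move=> s; apply: le_trans (u1 s).
  by apply: leeD => //; apply: iv_mono.
Qed.

Lemma part2 : preserves (@SUPERINV R).
Proof.
move=> C C' f _ w' _ v hi.
have [_ h] := main2 C f C' w' (impl_Sr _ _ hi).
exact: h.
Qed.

End Proofs.

Theorem theorem6p8 (R : realType) :
  yields_upper_bounds (@SUPERINV R) /\ preserves (@SUPERINV R).
Proof. split; [exact: part1|exact: part2]. Qed.
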